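(* Let $p$ be a prime, let $V$ be an $n$-dimensional vector space over $GF(p)$, and fix an identification of $V$ with the additive group of $GF(p^n)$. Let $S \leq \mathrm{Aut}(V)$ be the group of all maps $\sigma_t : v \mapsto tv$ for $t \in GF(p^n)^\times$ (multiplication in the field), and let $L \leq \mathrm{Aut}(V)$ be the Galois group of $GF(p^n)$ over $GF(p)$, i.e. the cyclic group of order $n$ generated by the Frobenius map $v \mapsto v^p$. Suppose $K$ is a subgroup of $\mathrm{Aut}(V)$ with $|K| = qp^r$, where $q$ is a prime with $p < q$ and $r \geq 1$, and suppose that a Sylow $q$-subgroup of $K$ acts irreducibly on $V$. Then $K$ is conjugate in $\mathrm{Aut}(V)$ to the group $TH$, where $T \leq S$ has order $q$ and $H \leq L$ has order $p^r$. In particular, $p^r$ divides $n$. *)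

(* Defs.v *)
(* V = GF(p^n) viewed as an F_p-vector space, where
   F is a finite field of order p^n. Aut(V) = GL(V) = additive bijections of F
   (over the prime field GF(p), additive = GF(p)-linear). *)
From mathcomp Require Export all_boot all_order all_algebra all_fingroup all_solvable all_field.
Set Implicit Arguments. Unset Strict Implicit. Unset Printing Implicit Defensive.
Import GRing.Theory.

Definition is_linear_aut (F : finFieldType) (s : {perm F}) : Prop :=
  forall x y : F, s (x + y)%R = (s x + s y)%R.

Definition in_S (F : finFieldType) (s : {perm F}) : Prop :=
  exists t : F, t != 0%R /\ forall x : F, s x = (t * x)%R.

Definition in_L (F : finFieldType) (p : nat) (s : {perm F}) : Prop :=
  exists i : nat, forall x : F, s x = (x ^+ (p ^ i))%R.

(* GF(p)-subspaces of V = F: additive subgroups (closure under GF(p)-scalars,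
   i.e. under nat multiples, and under negation follows automatically). *)
Definition Fp_subspace (F : finFieldType) (W : {set F}) : Prop :=
  (0%R \in W) /\ forall x y, x \in W -> y \in W -> (x + y)%R \in W.

Definition acts_irreducibly (F : finFieldType) (Q : {set {perm F}}) : Prop :=
  forall W : {set F}, Fp_subspace W ->
    (forall (g : {perm F}) (w : F), g \in Q -> w \in W -> g w \in W) ->
    W = [set 0%R] \/ W = [set: F].

(* Main.v *)
From HB Require Import structures.
Require Import Defs.
From mathcomp Require Import all_character.
Import GRing.Theory.
Set Implicit Arguments. Unset Strict Implicit. Unset Printing Implicit Defensive.

Section H1.
Local Open Scope ring_scope.
Variable F : finFieldType.

Lemma lin0 (s : {perm F}) : is_linear_aut s -> s 0 = 0.
Proof. by move=> hs; have := hs 0 0; rewrite addr0 => h; apply: (addrI (s 0)); rewrite addr0 -h. Qed.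

Lemma linN (s : {perm F}) : is_linear_aut s -> forall y, s (- y) = - s y.
Proof.
move=> hs y; apply/eqP; rewrite -subr_eq0 opprK -hs addNr lin0 //.
Qed.

Lemma linM (s t : {perm F}) : is_linear_aut s -> is_linear_aut t -> is_linear_aut (s * t)%g.
Proof. by move=> hs ht x y; rewrite !permM hs ht. Qed.

Lemma linV (s : {perm F}) : is_linear_aut s -> is_linear_aut (s^-1)%g.
Proof.
move=> hs x y; apply: (@perm_inj _ s); rewrite hs !permKV //.
Qed.

Lemma linX (s : {perm F}) k : is_linear_aut s -> is_linear_aut (s ^+ k)%g.
Proof. by move=> hs; elim: k => [|k IH]; [move=> x y; rewrite expg0 !perm1 | rewrite expgS; apply: linM]. Qed.

Lemma eigen (p q : nat) (pch : p \in [pchar F]) (hq : prime q) (hpq : p != q)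
  (x : {perm F}) (xlin : is_linear_aut x) (xq : (x ^+ q)%g = 1%g)
  (z : F) (zq : z ^+ q = 1) (z1 : forall j, (0 < j < q)%N -> z ^+ j != 1) :
  exists a : nat, exists2 psi : F -> F, (forall u v, psi (u + v) = psi u + psi v) &
     (forall w, psi (x w) = z ^+ a * psi w) /\ psi 1 != 0.
Proof.
have [m qm] : exists m, q = m.+1 by exists q.-1; rewrite prednK // prime_gt0.
pose psi (a : nat) w := \sum_(j < q) (z ^+ a) ^+ (m - j) * (x ^+ j)%g w.
have psiD a u v : psi a (u + v) = psi a u + psi a v.
  by rewrite /psi -big_split /=; apply: eq_bigr => j _; rewrite (@linX x j xlin) mulrDr.
have psiX a w : psi a (x w) = z ^+ a * psi a w.
  rewrite /psi mulr_sumr.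
  have e1 j : (x ^+ j)%g (x w) = (x ^+ j.+1)%g w by rewrite expgS permM.
  under eq_bigr do rewrite e1.
  rewrite qm big_ord_recr big_ord_recl /= subnn expr0 mul1r -qm xq perm1.
  rewrite subn0 mulrA -exprS -exprM mulnC exprM -qm zq expr1n mul1r.
  rewrite addrC; congr (_ + _); apply: eq_bigr => j _ /=.
  rewrite /bump /= add1n mulrA -exprS; congr (_ ^+ _ * _).
  by case: j => j /= hj; rewrite subnS prednK // subn_gt0.
have geo j : (j < m)%N -> \sum_(a < q) (z ^+ (m - j)) ^+ a = 0.
  move=> hj; have r1 : z ^+ (m - j) - 1 != 0.
    by rewrite subr_eq0 z1 // subn_gt0 hj /= qm ltnS leq_subr.
  have := subrX1 (z ^+ (m - j)) q; rewrite exprAC zq expr1n subrr => /esym/eqP.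
  by rewrite mulf_eq0 (negbTE r1) /= => /eqP.
have sumE : \sum_(a < q) psi a 1 = q%:R * (x ^+ m)%g 1.
  rewrite /psi exchange_big /=.
  under eq_bigr do rewrite -mulr_suml.
  rewrite qm big_ord_recr /= big1 ?add0r.
    by rewrite subnn; under eq_bigr do rewrite expr0; rewrite sumr_const card_ord.
  move=> j _; under eq_bigr do rewrite exprAC.
  by rewrite -qm geo ?mul0r.
have : \sum_(a < q) psi a 1 != 0.
  rewrite sumE mulf_eq0 negb_or; apply/andP; split.
    by rewrite -(dvdn_pcharf pch) dvdn_prime2 ?(pcharf_prime pch).
  apply/eqP => h; have : (x ^+ m)%g 1 = (x ^+ m)%g 0 by rewrite h lin0 //; exact: linX.
  by move/perm_inj/eqP; rewrite oner_eq0.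
move=> nz; have [a _ ha] : exists2 a : 'I_q, true & psi a 1 != 0.
  apply/exists_inP; apply: contraR nz; rewrite negb_exists_in => /forall_inP h.
  by apply/eqP; apply: big1 => a _; apply/eqP; rewrite -[_ == _]negbK h.
by exists a, (psi a) => //; split.
Qed.
Lemma aut_frob (p : nat) (pcharFp : p \in [pchar F])
  (tau : F -> F) (tauD : forall x y, tau (x + y) = tau x + tau y)
  (tauM : forall x y, tau (x * y) = tau x * tau y) (tau1 : tau 1 = 1) :
  exists i : nat, forall x, tau x = x ^+ (p ^ i)%N.
Proof.
pose L := pPrimeCharType pcharFp.
pose f : L -> L := tau.
have fA : zmod_morphism f.
  by move=> x y; rewrite /f; have := tauD (x - y) y; rewrite subrK => ->; rewrite addrK.
have fM : monoid_morphism f by split.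
pose faM := GRing.isZmodMorphism.Build _ _ f fA.
pose fmM := GRing.isMonoidMorphism.Build _ _ f fM.
pose fR : {rmorphism L -> L} := HB.pack f faM fmM.
have fZ : scalable f.
  move=> a x; change (fR ((a : nat)%:R * x) = (a : nat)%:R * fR x).
  by rewrite rmorphM rmorph_nat.
pose flM := GRing.isScalable.Build _ _ _ _ f fZ.
pose fLRM : {lrmorphism L -> L} := HB.pack f faM fmM flM.
have /kAut_to_gal[beta galLbeta Dbeta]: kAut 1 {:L} (linfun fLRM).
  rewrite kAutfE; apply/kHomP_tmp; split=> [x /vlineP[a ->] | x y _ _]; rewrite !lfunE //=.
    by change (fLRM (a *: 1) = a *: 1); rewrite linearZ /= ; congr (_ *: _); exact: tau1.
have [alpha /eqP gen Dalpha] := finField_galois_generator (sub1v (fullv : {vspace L})).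
have : beta \in <[alpha]>%g by rewrite -gen.
case/cycleP => i Hb.
exists i => x.
have -> : tau x = (linfun fLRM) x by rewrite lfunE.
rewrite Dbeta ?memvf // Hb; clear Hb.
elim: i x => [|i IH] x; first by rewrite expg0 gal_id expn0 expr1.
rewrite expgSr galM ?memvf // IH Dalpha ?memvf // dimv1 card_Fp ?(pcharf_prime pcharFp) //.
by rewrite expn1 expnSr exprM.
Qed.

Lemma semilin (p : nat) (pch : p \in [pchar F]) (lam : F)
  (gen : forall B : {set F}, 1 \in B -> (forall a b, a \in B -> b \in B -> a + b \in B) ->
     (forall a, a \in B -> lam * a \in B) -> B = [set: F])
  (k : {perm F}) (klin : is_linear_aut k) (mu : F) (hk : forall y, k (lam * y) = mu * k y) :
  exists c : F, exists i : nat, c != 0 /\ forall y, k y = c * y ^+ (p ^ i).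
Proof.
pose c := k 1.
have c0 : c != 0.
  by apply/eqP => h; have := lin0 klin; rewrite -{2}h => /perm_inj/eqP; rewrite eq_sym oner_eq0.
pose tau y := k y / c.
have tau1 : tau 1 = 1 by rewrite /tau divff.
have tauD a b : tau (a + b) = tau a + tau b by rewrite /tau klin mulrDl.
pose B := [set a | [forall b, k (a * b) == tau a * k b]].
have HB : B = [set: F].
  apply: gen.
  - by rewrite inE; apply/forallP => b; rewrite mul1r tau1 mul1r.
  - move=> a a'; rewrite !inE => /forallP ha /forallP ha'; apply/forallP => b.
    by rewrite mulrDl klin (eqP (ha b)) (eqP (ha' b)) tauD mulrDl.
  - move=> a; rewrite !inE => /forallP ha; apply/forallP => b.
    by rewrite -mulrA hk (eqP (ha b)) /tau hk mulrA mulrA.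
have tauM a b : tau (a * b) = tau a * tau b.
  have : a \in B by rewrite HB inE.
  by rewrite inE => /forallP/(_ b)/eqP; rewrite /tau => ->; rewrite mulrA.
have [i hi] := aut_frob pch tauD tauM tau1.
exists c, i; split => // y.
by rewrite -hi /tau mulrC divfK.
Qed.

Lemma cyc_pow (x : {perm F}) (psi : F -> F) (lam : F) (hpsi : forall w, psi (x w) = lam * psi w) :
  forall k w, psi ((x ^+ k)%g w) = lam ^+ k * psi w.
Proof.
elim=> [|k IH] w; first by rewrite expg0 perm1 expr0 mul1r.
by rewrite expgSr permM hpsi IH exprS mulrA.
Qed.

Lemma ker_lem (Q : {group {perm F}}) (hirr : acts_irreducibly Q) (x : {perm F})
  (hQ : Q :=: <[x]>%g) (psi : F -> F) (psiD : forall u v, psi (u + v) = psi u + psi v)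
  (lam : F) (hpsi : forall w, psi (x w) = lam * psi w) (h1 : psi 1 != 0) :
  injective psi.
Proof.
have psi0 : psi 0 = 0.
  by have := psiD 0 0; rewrite addr0 => h; apply: (addrI (psi 0)); rewrite addr0 -h.
pose W := [set w | psi w == 0].
have : W = [set 0] \/ W = [set: F].
  apply: hirr; first split.
  - by rewrite inE psi0.
  - by move=> u v; rewrite !inE psiD => /eqP-> /eqP->; rewrite addr0.
  move=> g w; rewrite hQ => /cycleP[k ->]; rewrite !inE (cyc_pow hpsi) => /eqP->.
  by rewrite mulr0.
case=> hW; last first.
  have : (1 : F) \in W by rewrite hW inE.
  by rewrite inE (negbTE h1).
move=> u v huv; have : u - v \in W.
  rewrite inE; have := psiD (u - v) v; rewrite subrK huv => h.
  by apply/eqP; apply: (addIr (psi v)); rewrite add0r -h.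
by rewrite hW inE subr_eq0 => /eqP.
Qed.

Lemma gen_lem (p : nat) (pch : p \in [pchar F]) (Q : {group {perm F}}) (hirr : acts_irreducibly Q) (x : {perm F})
  (hQ : Q :=: <[x]>%g) (psi : {perm F}) (psiD : is_linear_aut psi)
  (lam : F) (hpsi : forall w, psi (x w) = lam * psi w) :
  forall B : {set F}, 1 \in B -> (forall a b, a \in B -> b \in B -> a + b \in B) ->
     (forall a, a \in B -> lam * a \in B) -> B = [set: F].
Proof.
move=> B B1 BD BL.
have B0 : 0 \in B.
  have h k : 1 *+ k.+1 \in B by elim: k => [|k IH]; rewrite ?mulr1n // mulrS BD.
  have := h p.-1; rewrite prednK ?prime_gt0 ?(pcharf_prime pch) //.
  by rewrite (pcharf0 pch).
have BX k b : b \in B -> lam ^+ k * b \in B.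
  by elim: k => [|k IH] hb; rewrite ?expr0 ?mul1r // exprS -mulrA BL // IH.
pose W := [set w | psi w \in B].
have : W = [set 0] \/ W = [set: F].
  apply: hirr; first split.
  - by rewrite inE lin0.
  - by move=> u v; rewrite !inE psiD; apply: BD.
  by move=> g w; rewrite hQ => /cycleP[k ->]; rewrite !inE (cyc_pow hpsi); apply: BX.
case=> hW.
  have : (psi^-1)%g 1 \in W by rewrite inE permKV.
  rewrite hW inE => /eqP h; move: (permKV psi 1); rewrite h lin0 // => /eqP.
  by rewrite eq_sym oner_eq0.
apply/setP => y; rewrite inE.
have : (psi^-1)%g y \in W by rewrite hW inE.
by rewrite inE permKV.
Qed.
End H1.


Section H2.
Variable F : finFieldType.
Local Open Scope ring_scope.

Definition fixs (G : {set {perm F}}) := [set w : F | [forall g in G, g w == w]].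

Lemma fix_card (G : {group {perm F}}) (r' : nat) : (r'.-group G)%g -> (#|F| = #|fixs G| %[mod r'])%N.
Proof.
move=> pG.
have acts : [acts G, on [set: F] | 'P].
  by apply/actsP => a _ x; rewrite !inE.
rewrite -cardsT (pgroup_fix_mod pG acts); congr (_ %% _)%N; apply: eq_card => w; rewrite !inE /=.
apply/subsetP/forall_inP => h g hg.
  by have := h g hg; rewrite inE apermE.
by rewrite inE apermE h.
Qed.

Lemma fixs_sub (G : {set {perm F}}) (hG : forall g, g \in G -> is_linear_aut g) :
  Fp_subspace (fixs G).
Proof.
split.
  rewrite inE; apply/forall_inP => g hg.
  by have h := hG g hg; have := h 0 0; rewrite GRing.addr0 => e; apply/eqP;
     apply: (GRing.addrI (g 0)); rewrite GRing.addr0 -e.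
move=> u v; rewrite !inE => /forall_inP hu /forall_inP hv; apply/forall_inP => g hg.
by rewrite (hG g hg) (eqP (hu g hg)) (eqP (hv g hg)).
Qed.

Lemma fixs_inv (G : {group {perm F}}) (s : {perm F}) w :
  s \in 'N(G)%g -> w \in fixs G -> s w \in fixs G.
Proof.
move=> nG; rewrite !inE => /forall_inP hw; apply/forall_inP => h hh.
have hc : (h ^ s^-1)%g \in G by rewrite memJ_norm // groupV.
have e : (s * h)%g = (h ^ s^-1 * s)%g by rewrite /conjg invgK !mulgA mulgKV.
by rewrite -permM e permM (eqP (hw _ hc)).
Qed.
End H2.

Section PartA.
Variable F : finFieldType.

Lemma partA (p q r n : nat) (hp : prime p) (hcard : #|F| = p ^ n)
  (K : {group {perm F}}) (hK : forall s, s \in K -> is_linear_aut s)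
  (hq : prime q) (hpq : p < q) (hKcard : #|K| = q * p ^ r)
  (Q : {group {perm F}}) (sylQ : Q \in ('Syl_q(K))%g) (hirr : acts_irreducibly Q) :
  (Q <| K)%g /\ #|Q| = q.
Proof.
have n0 : 0 < n.
  case: n hcard => // h; have := finNzRing_gt1 F; by rewrite h.
have pq : p != q by rewrite neq_ltn hpq.
have sylQ' : (q.-Sylow(K) Q)%g by move: sylQ; rewrite inE.
have cQ : #|Q| = q.
  have h0 : 0 < p ^ r by rewrite expn_gt0 prime_gt0.
  rewrite (card_Hall sylQ') hKcard partnM ?(prime_gt0 hq) //.
  rewrite part_pnat_id ?pnat_id // part_p'nat ?muln1 //.
  by rewrite pnatX (pnatE _ hp) !inE /= pq.
split=> //.
have solK : solvable K.
  apply: Burnside_p_a_q_b; rewrite hKcard.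
  have -> : 2 = size [:: p; q] by [].
  apply: uniq_leq_size; first exact: primes_uniq.
  move=> x; rewrite mem_primes => /and3P[px _]; rewrite Euclid_dvdM // Euclid_dvdX //.
  by rewrite !dvdn_prime2 // !inE => /orP[-> | /andP[-> _]]; rewrite ?orbT.
have ntK : K != 1%g :> {set _}.
  by apply/eqP => h; move: hKcard; rewrite h cards1 => /esym/eqP; rewrite muln_eq1 => /andP[/eqP q1 _]; move: hq; rewrite q1.
have [M [sMK nMK ntM abM]] := solvable_norm_abelem solK (normal_refl K) ntK.
have [r' r'pr /abelem_pgroup r'M] := is_abelemP abM.
have [_ r'dvd _] := pgroup_pdiv r'M ntM.
have r'K : r' %| q * p ^ r by rewrite -hKcard (dvdn_trans r'dvd) // cardSg.
have [r'q | r'p] : r' = q \/ r' = p.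
  move: r'K; rewrite Euclid_dvdM // Euclid_dvdX // !dvdn_prime2 //.
  by case/orP => [/eqP->|/andP[/eqP-> _]]; [left|right].
  subst r'.
  have sMQ : M \subset Q := normal_sub_max_pgroup (Hall_max sylQ') r'M nMK.
  have : #|M| %| q by rewrite -cQ cardSg.
  have M1 : #|M| != 1 by rewrite -trivg_card1.
  move/(prime_nt_dvdP hq M1) => cM.
  have eMQ : M :=: Q by apply/eqP; rewrite eqEcard sMQ cM cQ /=.
  by rewrite -eMQ.
subst r'.
exfalso.
have hsub := fixs_sub (fun g hg => hK g (subsetP sMK g hg)).
have := hirr _ hsub.
have inv : forall (g : {perm F}) (w : F), g \in Q -> w \in fixs M -> g w \in fixs M.
  move=> g w hg; apply: fixs_inv.
  have := normal_norm nMK => /subsetP; apply.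
  by move: sylQ' => /pHall_sub/subsetP; apply.
case/(_ inv) => hC.
  have := fix_card r'M; rewrite hC cards1 hcard => h.
  have : p %| 1.
    by rewrite /dvdn -h -(prednK n0) expnS modnMr.
  by rewrite dvdn1 => /eqP p1; move: hp; rewrite p1.
move: ntM; rewrite trivg_card1 => /eqP; apply.
apply/eqP; rewrite -trivg_card1; apply/eqP/trivgP/subsetP => h hh; rewrite inE.
apply/eqP/permP => w; rewrite perm1.
have : w \in fixs M by rewrite hC inE.
by rewrite inE => /forall_inP/(_ h hh)/eqP.
Qed.
End PartA.


Section H3.
Variable F : finFieldType.
Local Open Scope ring_scope.

Definition Sset := [set s : {perm F} | [exists t : F, [forall y, s y == t * y]]].
Lemma Sset_group : group_set Sset.
Proof.
apply/group_setP; split.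
  by rewrite inE; apply/existsP; exists 1; apply/forallP => y; rewrite perm1 mul1r.
move=> s1 s2; rewrite !inE => /existsP[t1 /forallP h1] /existsP[t2 /forallP h2].
by apply/existsP; exists (t2 * t1); apply/forallP => y; rewrite permM (eqP (h1 y)) (eqP (h2 _)) mulrA.
Qed.
Canonical Sgrp := Group Sset_group.

Lemma SgrpP (s : {perm F}) : reflect (exists t, forall y, s y = t * y) (s \in Sgrp).
Proof.
rewrite inE; apply: (iffP existsP) => [[t /forallP h]|[t h]]; exists t.
  by move=> y; apply/eqP.
by apply/forallP => y; rewrite h.
Qed.

Lemma Sgrp_abelian : abelian Sgrp.
Proof.
apply/centsP => s /SgrpP[t ht] s' /SgrpP[t' ht']; apply/permP => y.
by rewrite !permM ht ht' ht' ht mulrCA.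
Qed.

Variable p : nat.
Hypothesis pch : p \in [pchar F].

Definition frob : {perm F} := perm (fmorph_inj (pFrobenius_aut pch)).
Lemma frobX i y : (frob ^+ i)%g y = y ^+ (p ^ i).
Proof.
elim: i y => [|i IH] y; first by rewrite expg0 perm1 expn0 expr1.
by rewrite expgSr permM IH permE expnSr exprM; apply: pFrobenius_autE.
Qed.

Lemma frob_inj (a b : F) : a ^+ p = b ^+ p -> a = b.
Proof. by rewrite -!(pFrobenius_autE pch) => /fmorph_inj. Qed.

Lemma Sgrp_p' : ~~ (p %| #|Sgrp|)%N.
Proof.
apply/negP => /(Cauchy (pcharf_prime pch))[s hs os].
have [t ht] := SgrpP _ hs.
have sX k y : (s ^+ k)%g y = t ^+ k * y.
  elim: k y => [|k IH] y; first by rewrite expg0 perm1 expr0 mul1r.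
  by rewrite expgSr permM IH ht exprSr mulrA [t * _]mulrC.
have e : (s ^+ p)%g = 1%g by rewrite -os expg_order.
have tp : t ^+ p = 1 ^+ p by have := sX p 1; rewrite e perm1 mulr1 expr1n => <-.
have t1 := frob_inj tp.
have s1 : s = 1%g by apply/permP => y; rewrite ht t1 mul1r perm1.
by move: os; rewrite s1 order1 => p1; move: (pcharf_prime pch); rewrite -p1.
Qed.

Lemma SL_TI : (Sgrp :&: <[frob]> = 1)%g.
Proof.
apply/trivgP/subsetP => s; rewrite inE => /andP[/SgrpP[t ht] /cycleP[i ei]].
have t1 : t = 1 by have := ht 1; rewrite ei frobX expr1n mulr1 => <-.
by rewrite inE; apply/eqP/permP => y; rewrite ht t1 mul1r perm1.
Qed.
End H3.

Theorem proposition11 (F : finFieldType) (p n q r : nat)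
  (hp : prime p) (hcard : #|F| = p ^ n)
  (K : {group {perm F}})
  (hK : forall s, s \in K -> is_linear_aut s)
  (hq : prime q) (hpq : p < q) (hr : 0 < r)
  (hKcard : #|K| = q * p ^ r)
  (hirr : exists2 Q : {group {perm F}}, Q \in ('Syl_q(K))%g & acts_irreducibly Q) :
  (exists g : {perm F}, is_linear_aut g /\
     exists T H : {group {perm F}},
       [/\ (forall s, s \in T -> in_S s), #|T| = q,
           (forall s, s \in H -> in_L p s), #|H| = p ^ r
         & (K :^ g)%g = (T * H)%g])
  /\ p ^ r %| n.
Proof.
have pch : (p \in [pchar F])%R := card_finPcharP hcard hp.
have n0 : 0 < n.
  case: n hcard => // h; have := finNzRing_gt1 F; by rewrite h.
have pq : p != q by rewrite neq_ltn hpq.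
case: hirr => Q sylQ hirr.
have [nQK cQ] := partA hp hcard hK hq hpq hKcard sylQ hirr.
have [x hQx] : exists x, Q :=: <[x]>%g.
  by apply/cyclicP; rewrite prime_cyclic // cQ.
have xQ : x \in Q by rewrite hQx cycle_id.
have xK : x \in K by apply: subsetP (normal_sub nQK) _ xQ.
have xlin := hK x xK.
have ox : #[x]%g = q by rewrite orderE -hQx cQ.
have xq : (x ^+ q)%g = 1%g by rewrite -ox expg_order.
have Qlin : forall g, g \in Q -> is_linear_aut g.
  by move=> g hg; apply: hK; apply: subsetP (normal_sub nQK) _ hg.
have qQ : (q.-group Q)%g by rewrite /pgroup cQ pnat_id.
have fixQ : fixs Q = [set 0%R].
  have := hirr _ (fixs_sub Qlin).
  case=> [g w hg|//|hT]; first by apply: fixs_inv; apply: subsetP (normG Q) _ hg.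
  have : x = 1%g.
    apply/permP => w; rewrite perm1; have : w \in fixs Q by rewrite hT inE.
    by rewrite inE => /forall_inP/(_ x xQ)/eqP.
  by move=> x1; move: ox; rewrite x1 order1 => q1; move: hq; rewrite -q1.
have qF : q %| #|F|.-1.
  have := fix_card qQ; rewrite fixQ cards1.
  have F0 : 0 < #|F| by rewrite hcard expn_gt0 prime_gt0.
  rewrite -{1}(prednK F0) -addn1 -{2}(add0n 1) => /eqP; rewrite eqn_modDr.
  by rewrite mod0n.
have [u _ ou] := @Cauchy _ q [set: {unit F}]%G hq (ltac:(by rewrite card_finField_unit)).
pose zeta := FinRing.uval u.
have zq : (zeta ^+ q = 1)%R by rewrite /zeta -FinRing.val_unitX -ou expg_order FinRing.val_unit1.
have z1 j : 0 < j < q -> (zeta ^+ j != 1)%R.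
  move=> /andP[j0 jq]; apply/eqP => h.
  have : (u ^+ j)%g = 1%g by apply: val_inj; rewrite FinRing.val_unitX FinRing.val_unit1.
  move/eqP; rewrite -order_dvdn ou => /(dvdn_leq j0); rewrite leqNgt jq.
  done.
have [a [psi0 psiD [hpsi h1]]] := eigen pch hq pq xlin xq zq z1.
pose lam := (zeta ^+ a)%R.
have psi_inj := ker_lem hirr hQx psiD hpsi h1.
pose g := perm psi_inj.
have glin : is_linear_aut g by move=> u1 v1; rewrite !permE psiD.
have hg : forall w, g (x w) = (lam * g w)%R by move=> w; rewrite !permE hpsi.
have gen := gen_lem pch hirr hQx glin hg.
have xg : forall y, (x ^ g)%g y = (lam * y)%R.
  by move=> y; rewrite /conjg !permM hg permKV.
have lam0 : lam != 0%R.
  apply/eqP => l0; have : (lam ^+ q = 1)%R by rewrite /lam -exprM mulnC exprM zq expr1n.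
  by rewrite l0 expr0n gtn_eqF ?prime_gt0 //= => /eqP; rewrite eq_sym oner_eq0.
pose T := (Q :^ g)%G.
have Tform : forall s, s \in T -> exists k, forall y, s y = (lam ^+ k * y)%R.
  move=> s; rewrite /T /= hQx -cycleJ => /cycleP[k ->]; exists k => y.
  exact: (cyc_pow (psi := id) xg).
have TS : forall s, s \in T -> in_S s.
  by move=> s /Tform[k hk]; exists (lam ^+ k)%R; split => //; rewrite expf_neq0.
have cT : #|T| = q by rewrite cardJg.
pose Kc := (K :^ g)%G.
have Kclin : forall s, s \in Kc -> is_linear_aut s.
  move=> s; rewrite mem_conjg => hs; have := hK _ hs.
  rewrite /conjg invgK => h; have -> : s = (g^-1 * (g * s * g^-1) * g)%g.
    by rewrite !mulgA mulVg mul1g mulgKV.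
  by rewrite mulgA in h; exact: (linM (linM (linV glin) h) glin).
have nTKc : (T <| Kc)%g by rewrite normalJ.
have Kcsemi : forall s, s \in Kc -> exists c : F, exists i : nat, c != 0%R /\ forall y, s y = (c * y ^+ (p ^ i))%R.
  move=> s hs.
  have : ((x ^ g) ^ s)%g \in T.
    rewrite memJ_norm; first by rewrite /T /= memJ_conjg.
    by apply: subsetP (normal_norm nTKc) _ hs.
  case/Tform => k hk.
  apply: (semilin pch gen (Kclin _ hs) (mu := (lam ^+ k)%R)) => z.
  have xg' : forall y, g (x ((g^-1)%g y)) = (lam * y)%R by move=> y; rewrite -xg /conjg !permM.
  by have := hk (s z); rewrite /conjg !permM permK xg'.
have [P sylP] := Sylow_exists p Kc.
have h0 : 0 < p ^ r by rewrite expn_gt0 prime_gt0.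
have cKc : #|Kc| = q * p ^ r by rewrite cardJg.
have cP : #|P| = p ^ r.
  rewrite (card_Hall sylP) cKc partnM ?(prime_gt0 hq) //.
  rewrite [(p ^ r)`_p]part_pnat_id ?pnatX ?pnat_id ?orbT // part_p'nat ?mul1n //.
  by rewrite (pnatE _ hq) !inE /= eq_sym.
have PKc : P \subset Kc := pHall_sub sylP.
have TKc : T \subset Kc by rewrite conjSg normal_sub.
have coTP : coprime #|T| #|P|.
  by rewrite cT cP coprime_pexpr // (prime_coprime _ hq) dvdn_prime2 // eq_sym.
have eKc : Kc :=: (T * P)%g.
  apply/esym/eqP; rewrite eqEcard mul_subG //= TI_cardMg ?coprime_TIg // cT cP cKc.
  done.
pose S := Sgrp F.
pose L := <[frob pch]>%G.
have PN : P \subset 'N(S)%g.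
  apply/subsetP => k hk; rewrite inE; apply/subsetP => s' /imsetP[s hs ->].
  have [c [i [c0 hc]]] := Kcsemi k (subsetP PKc k hk).
  have [t ht] := SgrpP _ hs.
  apply/SgrpP; exists (t ^+ (p ^ i))%R => y.
  rewrite /conjg !permM ht.
  have := hc ((k^-1)%g y); rewrite permKV => e.
  by rewrite hc exprMn mulrCA -e.
pose J := (S <*> P)%G.
have eJ : J :=: (S * P)%g by rewrite /J /= norm_joinEr.
have JN : J \subset 'N(S)%g by rewrite join_subG normG PN.
pose H0 := (J :&: L)%G.
have coSP : coprime #|S| #|P| by rewrite cP coprime_pexpr // coprime_sym prime_coprime // Sgrp_p'.
have SPi : (S :&: P = 1)%g by apply: coprime_TIg.
have SH0i : (S :&: H0 = 1)%g.
  apply/trivgP; rewrite -(SL_TI pch); apply: setIS; exact: subsetIr.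
have PH0S : P \subset (H0 * S)%g.
  apply/subsetP => k hk.
  have [c [i [c0 hc]]] := Kcsemi k (subsetP PKc k hk).
  pose f := (frob pch ^+ i)%g.
  have sig : (f^-1 * k)%g \in S.
    apply/SgrpP; exists c => y; rewrite permM hc -frobX permKV.
    by [].
  have fH0 : f \in H0.
    rewrite inE mem_cycle andbT.
    have -> : f = (k * (f^-1 * k)^-1)%g by rewrite invMg invgK mulgA mulgV mul1g.
    rewrite groupM ?groupV //.
      by apply: subsetP (joing_subr _ _) _ hk.
    by apply: subsetP (joing_subl _ _) _ sig.
  have -> : k = (f * (f^-1 * k))%g by rewrite mulgA mulgV mul1g.
  exact: mem_mulg.
have H0N : H0 \subset 'N(S)%g := subset_trans (subsetIl _ _) JN.
have cH0 : #|H0| = p ^ r.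
  apply/eqP; rewrite eqn_leq; apply/andP; split.
    have : #|(S * H0)%g| <= #|J|.
      by apply: subset_leq_card; rewrite mul_subG ?joing_subl ?subsetIl.
    by rewrite TI_cardMg // eJ TI_cardMg // leq_pmul2l ?cardG_gt0 // cP.
  have : #|(S * P)%g| <= #|(S * H0)%g|.
    apply: subset_leq_card; apply: subset_trans (mulgS S PH0S) _.
    by rewrite (normC H0N) mulgA mulGid.
  by rewrite !TI_cardMg // leq_pmul2l ?cardG_gt0 // cP.
have solS : solvable S := abelian_sol (Sgrp_abelian F).
have H0SP : H0 \subset (S * P)%g by rewrite -eJ subsetIl.
have [s sS eH0] := SchurZassenhaus_trans_sol solS PN H0SP coSP (etrans cH0 (esym cP)).
have [t ht] := SgrpP _ sS.
split.
  exists (g * s)%g; split.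
    by apply: linM => // u1 v1; rewrite !ht mulrDr.
  exists T, H0; split => //.
  - move=> s' /setIP[_ /cycleP[i ->]]; exists i => y; exact: frobX.
  - rewrite conjsgM -/Kc eKc conjsMg -eH0; congr (_ * _)%g.
    apply/normP; apply: subsetP (cent_sub T) _ _.
    have TsS : T \subset S.
      by apply/subsetP => s' /Tform[k hk]; apply/SgrpP; exists (lam ^+ k)%R.
    exact: subsetP (centS TsS) _ (subsetP (Sgrp_abelian F) _ sS).
rewrite -cH0; apply: dvdn_trans (cardSg (subsetIr J L)) _.
rewrite -orderE order_dvdn; apply/eqP/permP => y.
by rewrite frobX perm1 -hcard expf_card.
Qed.
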